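(* Let $X$ be a scattered topological space such that $\mathrm{Homeo}(X)$ is fully transitive. Then the topological group $\mathrm{Homeo}(X)$ is amenable and Roelcke-precompact.
   Context: A topological space (not assumed Hausdorff) is scattered if every nonempty subset has a point that is isolated in that subset. For scattered $X$, $\mathrm{Homeo}(X)$ is endowed with the topology of pointwise convergence on $X$, making it a Hausdorff topological group. Two points $x,y\in X$ are similar if there are neighbourhoods $U_x\ni x$, $U_y\ni y$ and a homeomorphism $h\colon U_x\to U_y$ with $h(x)=y$. $\mathrm{Homeo}(X)$ is fully transitive if for every $k$ and all $k$-tuples $(x_1,\dots,x_k)$, $(y_1,\dots,y_k)$ of pairwise distinct points with $x_i$ similar to $y_i$ for each $i$, some homeomorphism $g$ satisfies $g(x_i)=y_i$ for all $i$. Amenable: every continuous affine action on a nonempty compact convex set has a fixed point. Roelcke-precompact: for every identity neighbourhood $U$ there is a finite $F$ with $G=UFU$. *)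

(* Defs.v *)
From HB Require Import structures.
From mathcomp Require Import all_boot all_order all_algebra.
From mathcomp Require Import all_classical all_reals all_analysis.
Set Implicit Arguments. Unset Strict Implicit. Unset Printing Implicit Defensive.
Import Order.TTheory GRing.Theory Num.Theory.
Local Open Scope classical_set_scope.
Local Open Scope ring_scope.

Section Defs.
Context {X : topologicalType}.

Definition scattered : Prop :=
  forall A : set X, A !=set0 ->
    exists2 x, A x & exists2 U : set X, open U /\ U x & U `&` A = [set x].

Definition subspace_homeo (A B : set X) (h : X -> X) : Prop :=
  exists k : X -> X,
    [/\ {in A, forall a, B (h a) /\ k (h a) = a},
        {in B, forall b, A (k b) /\ h (k b) = b},
        {within A, continuous h} & {within B, continuous k}].

Definition similar (x y : X) : Prop :=
  exists Ux Uy (h : X -> X),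
    [/\ nbhs x Ux, nbhs y Uy, subspace_homeo Ux Uy h & h x = y].

Definition homeo (f : X -> X) : Prop := subspace_homeo setT setT f.
Definition Homeo : set (X -> X) := [set f | homeo f].

Definition fully_transitive : Prop :=
  forall (k : nat) (xs ys : 'I_k -> X),
    injective xs -> injective ys -> (forall i, similar (xs i) (ys i)) ->
    exists2 g, Homeo g & forall i, g (xs i) = ys i.

(* Homeo(X) carries the subspace topology of the topology of pointwise
   convergence {ptws X -> X}. Identity neighbourhoods of Homeo(X): *)
Definition homeo_id_nbhs (U : set (X -> X)) : Prop :=
  U `<=` Homeo /\
  exists2 V : set {ptws X -> X}, nbhs (id : {ptws X -> X}) V & V `&` Homeo `<=` U.

Definition roelcke_precompact : Prop :=
  forall U, homeo_id_nbhs U ->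
    exists2 F : set (X -> X), finite_set F /\ F `<=` Homeo &
      Homeo = [set g | exists u f v, [/\ U u, F f, U v & g = u \o f \o v]].

Definition amenable : Prop :=
  forall (R : realType) (E : tvsType R) (K : set E)
         (act : (X -> X) -> E -> E),
    hausdorff_space E -> K !=set0 -> compact K -> convex_set (K : set (convex_lmodType E)) ->
    (forall g k, Homeo g -> K k -> K (act g k)) ->
    (forall k, K k -> act id k = k) ->
    (forall g h k, Homeo g -> Homeo h -> K k -> act (g \o h) k = act g (act h k)) ->
    (forall g a b (t : R), Homeo g -> K a -> K b -> 0 <= t -> t <= 1 ->
       act g (t *: a + (1 - t) *: b) = t *: act g a + (1 - t) *: act g b) ->
    {within (Homeo `*` K : set ({ptws X -> X} * E)), continuous (fun p : {ptws X -> X} * E => act p.1 p.2)} ->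
    exists2 k, K k & forall g, Homeo g -> act g k = k.

End Defs.
Arguments scattered : clear implicits.
Arguments fully_transitive : clear implicits.
Arguments amenable : clear implicits.
Arguments roelcke_precompact : clear implicits.

(* Main.v *)
Require Import Defs.
From mathcomp Require Import all_boot all_order all_algebra all_fingroup.
From mathcomp Require Import all_classical all_reals all_analysis.
From mathcomp Require Import ring lra.
Set Implicit Arguments. Unset Strict Implicit. Unset Printing Implicit Defensive.
Import Order.TTheory GRing.Theory Num.Theory.
Section Ext. Context (T : finType) (e : rel T).
Hypotheses (erefl' : forall x, e x x) (esym : forall x y, e x y -> e y x)
  (etrans : forall x y z, e x y -> e y z -> e x z).

Lemma perm_extend_n n (f : T -> option T) :
  #|[set x | f x == None]| = n ->
  (forall x x' y, f x = Some y -> f x' = Some y -> x = x') ->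
  (forall x y, f x = Some y -> e x y) ->
  exists tau : {perm T}, (forall x, e x (tau x)) /\ (forall x y, f x = Some y -> tau x = y).
Proof.
elim: n f => [|n IH] f Hn finj fe.
  have fS x : f x != None.
    apply/negP => /eqP fx; move: Hn => /eqP; rewrite cards_eq0 => /eqP/setP/(_ x).
    by rewrite !inE fx.
  pose t x := odflt x (f x).
  have tinj : injective t.
    move=> x x'; rewrite /t; move: (fS x) (fS x').
    case fx: (f x) => [y|//]; case fx': (f x') => [y'|//] _ _ /= yy.
    by apply: (finj _ _ y) => //; rewrite fx' yy.
  exists (perm tinj); split => [x|x y fx]; rewrite permE /t.
    by move: (fS x); case fx: (f x) => [y|//] _ /=; apply: fe.
  by rewrite fx.
have : 0 < #|[set x | f x == None]| by rewrite Hn.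
move=> /card_gt0P [x0]; rewrite inE => /eqP fx0.
have [y0 [ey0 ny0]] : exists y0, e x0 y0 /\ forall x, f x != Some y0.
  case: (pselect (exists y0, e x0 y0 /\ forall x, f x != Some y0)) => // H.
  exfalso.
  have Hc : forall y, e x0 y -> exists x, f x = Some y.
    move=> y ey; apply: contrapT => nx; apply: H; exists y; split => // x.
    by apply/eqP => fx; apply: nx; exists x.
  pose t x := odflt x (f x).
  pose C := [set y | e x0 y].
  pose D := [set x | e x0 x && (f x != None)].
  have CD : C \subset t @: D.
    apply/fintype.subsetP => y; rewrite inE => /[dup] ey /Hc [x fx].
    apply/imsetP; exists x; last by rewrite /t fx.
    by rewrite inE fx andbT; apply: etrans ey (esym (fe _ _ fx)).
  have DC : D \proper C.
    apply/properP; split.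
      by apply/fintype.subsetP => x; rewrite !inE => /andP[].
    by exists x0; rewrite !inE ?erefl' // fx0 andbF.
  have := subset_leq_card CD; have := leq_imset_card t D; have := proper_card DC.
  move=> h1 h2 h3; have := leq_trans h3 h2; by rewrite leqNgt h1.
pose f' x := if x == x0 then Some y0 else f x.
have h1 : #|[set x | f' x == None]| = n.
  have -> : [set x | f' x == None] = [set x | f x == None] :\ x0.
    apply/setP => x; rewrite !inE /f'; case: (x =P x0) => [->|] //=; rewrite ?fx0 ?eqxx //=.
  by rewrite (cardsD1 x0) inE fx0 eqxx in Hn; case: Hn.
have h2 : forall x x' y, f' x = Some y -> f' x' = Some y -> x = x'.
  move=> x x' y; rewrite /f'; case: (x =P x0) => [->|nx]; case: (x' =P x0) => [->|nx'] //.
  - by case=> <- fx'; move: (ny0 x'); rewrite fx' eqxx.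
  - by move=> fx [yy]; move: (ny0 x); rewrite fx yy eqxx.
  - exact: finj.
have h3 : forall x y, f' x = Some y -> e x y.
  move=> x y; rewrite /f'; case: (x =P x0) => [-> [<-]|_] //; exact: fe.
have [tau [te tf]] := IH f' h1 h2 h3.
exists tau; split => // x y fx; apply: tf; rewrite /f'; case: (x =P x0) => // xx0.
by move: fx; rewrite xx0 fx0.
Qed.

Lemma perm_extend (f : T -> option T) :
  (forall x x' y, f x = Some y -> f x' = Some y -> x = x') ->
  (forall x y, f x = Some y -> e x y) ->
  exists tau : {perm T}, (forall x, e x (tau x)) /\ (forall x y, f x = Some y -> tau x = y).
Proof. exact: perm_extend_n. Qed.
End Ext.
Local Open Scope classical_set_scope.
Local Open Scope ring_scope.

Section S. Context (X : topologicalType).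

Definition agree_on (s : seq X) (f : X -> X) : set (X -> X) :=
  [set g | forall x, x \in s -> g x = f x].

Definition agree_filter (f : X -> X) : set_system {ptws X -> X} :=
  filter_from [set: seq X] (agree_on ^~ f).

Lemma agree_filter_filter f : Filter (agree_filter f).
Proof.
apply: filter_from_filter; first by exists [::].
move=> s t _ _; exists (s ++ t) => //.
move=> g H; split => x xs; apply: H; rewrite mem_cat xs ?orbT //.
Qed.

Lemma ptws_nbhs (f : {ptws X -> X}) (V : set {ptws X -> X}) :
  nbhs f V -> exists s : seq X, forall g, (forall x, x \in s -> g x = f x) -> V g.
Proof.
have FF := agree_filter_filter f.
have : agree_filter f --> f.
  apply/cvg_sup => i A /=.
  rewrite (@nbhsE (initial_topology (fun g : X -> X => g i))) => -[B [[C Cop CB] Bf] BA].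
  exists [:: i] => // g /(_ i (mem_head _ _)) gi.
  apply: BA; rewrite -CB /=; rewrite -CB /= in Bf; by rewrite gi.
by move=> /(_ V) H /H [s _ sV]; exists s => g gs; exact: sV.
Qed.
End S.

Section T. Context (R : realType) (E : tvsType R).
Lemma conv2 (C : set E) (a b : E) (t : R) : convex_set (C : set (convex_lmodType E)) -> C a -> C b -> 0 <= t -> t <= 1 ->
  C (t *: a + (1 - t) *: b).
Proof.
move=> cC Ca Cb t0 t1.
pose tt := Itv01 t0 t1.
have := cC a b tt (mem_set Ca) (mem_set Cb).
by rewrite inE.
Qed.
End T.
Section T2. Context (R : realType) (E : tvsType R).
Definition avg (s : seq E) : E := (size s)%:R^-1 *: \sum_(y <- s) y.

Lemma avg1 y : avg [:: y] = y.
Proof. by rewrite /avg big_seq1 /= invr1 scale1r. Qed.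

Lemma avg_cons y s : s != [::] ->
  avg (y :: s) = ((size s).+1%:R)^-1 *: y + (1 - ((size s).+1%:R)^-1) *: avg s.
Proof.
move=> sn; rewrite /avg big_cons /= scalerDr; congr (_ + _).
rewrite scalerA; congr (_ *: _).

have n0 : (size s)%:R != 0 :> R by rewrite pnatr_eq0 size_eq0.
have n10 : (size s).+1%:R != 0 :> R by rewrite pnatr_eq0.
field; rewrite ?n0 ?n10 //= -natr1 addrC.
Qed.

Lemma t_ge0 (n : nat) : 0 <= ((n.+1)%:R : R)^-1.
Proof. by rewrite invr_ge0 ler0n. Qed.
Lemma t_le1 (n : nat) : ((n.+1)%:R : R)^-1 <= 1.
Proof. by rewrite invf_le1 ?ltr0Sn // ler1n. Qed.

Lemma conv_avg (C : set E) s : convex_set (C : set (convex_lmodType E)) ->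
  s != [::] -> (forall y, y \in s -> C y) -> C (avg s).
Proof.
move=> cC; elim: s => [//|y s IH] _ Hs.
have [->|sn] := eqVneq s [::]; first by rewrite avg1; apply: Hs; rewrite mem_head.
rewrite avg_cons //; apply: conv2.
- exact: cC.
- by apply: Hs; rewrite mem_head.
- by apply: IH => // z zs; apply: Hs; rewrite in_cons zs orbT.
- exact: t_ge0.
- exact: t_le1.
Qed.

Lemma affine_avg (K : set E) (phi : E -> E) s : convex_set (K : set (convex_lmodType E)) ->
  (forall a b (t : R), K a -> K b -> 0 <= t -> t <= 1 ->
     phi (t *: a + (1 - t) *: b) = t *: phi a + (1 - t) *: phi b) ->
  s != [::] -> (forall y, y \in s -> K y) -> phi (avg s) = avg (map phi s).
Proof.
move=> cK Hphi; elim: s => [//|y s IH] _ Hs.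
have [->|sn] := eqVneq s [::]; first by rewrite /= !avg1.
have Hs' : forall z, z \in s -> K z by move=> z zs; apply: Hs; rewrite in_cons zs orbT.
rewrite avg_cons // Hphi; [|apply: Hs; rewrite mem_head|exact: conv_avg|exact: t_ge0|exact: t_le1].
rewrite IH // map_cons avg_cons ?size_map //.
  by case: (s) sn.
by [].
Qed.
End T2.

Section H. Context (X : topologicalType).

Lemma withinT (f : X -> X) : {within setT, continuous f} <-> continuous f.
Proof.
split => H x; have := H x; rewrite /continuous_at nbhs_subspaceT //.
Qed.

Lemma homeoP (f : X -> X) : homeo f <->
  exists k, [/\ cancel f k, cancel k f, continuous f & continuous k].
Proof.
split.
  move=> [k [H1 H2 H3 H4]]; exists k; split.
  - by move=> x; have [] := H1 x (in_setT x).
  - by move=> x; have [] := H2 x (in_setT x).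
  - exact/withinT.
  - exact/withinT.
move=> [k [H1 H2 H3 H4]]; exists k; split.
- by move=> x _; split.
- by move=> x _; split.
- exact/withinT.
- exact/withinT.
Qed.

Lemma homeo_id : Homeo (@id X).
Proof. by apply/homeoP; exists id; split => // x; apply: cvg_id. Qed.

Lemma homeo_comp (f g : X -> X) : Homeo f -> Homeo g -> Homeo (f \o g).
Proof.
move=> /homeoP [kf [f1 f2 f3 f4]] /homeoP [kg [g1 g2 g3 g4]].
apply/homeoP; exists (kg \o kf); split.
- by move=> x /=; rewrite f1 g1.
- by move=> x /=; rewrite g2 f2.
- by move=> x; apply: continuous_comp; [apply: g3|apply: f3].
- by move=> x; apply: continuous_comp; [apply: f4|apply: g4].
Qed.

Lemma homeo_inv (f : X -> X) : Homeo f ->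
  exists k, [/\ Homeo k, cancel f k & cancel k f].
Proof.
move=> /homeoP [k [f1 f2 f3 f4]]; exists k; split => //.
by apply/homeoP; exists f; split.
Qed.

Lemma homeo_inj (f : X -> X) : Homeo f -> injective f.
Proof. by move=> /homeo_inv [k [_ f1 _]]; exact: can_inj f1. Qed.

Definition horb (x y : X) := exists2 g, Homeo g & g x = y.

Lemma orb_refl x : horb x x.
Proof. by exists id => //; exact: homeo_id. Qed.
Lemma orb_sym x y : horb x y -> horb y x.
Proof. by move=> [g Hg <-]; have [k [Hk f1 _]] := homeo_inv Hg; exists k. Qed.
Lemma orb_trans x y z : horb x y -> horb y z -> horb x z.
Proof. by move=> [g Hg <-] [h Hh <-]; exists (h \o g) => //; exact: homeo_comp. Qed.
Lemma orb_similar x y : horb x y -> Defs.similar x y.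
Proof.
move=> [g Hg gx]; exists [set: X], [set: X], g; split => //; exact: filter_nbhsT.
Qed.

End H.

Lemma sub_near (R : realType) (E : tvsType R) (a b : E) (N : set E) :
  nbhs (a - b) N -> exists C1 C2, [/\ nbhs a C1, nbhs b C2 &
    forall z w, C1 z -> C2 w -> N (z - w)].
Proof.
move=> aN; have := @sub_continuous E (a, b) N aN.
move=> [[C1 C2] /= [C1a C2b] CN]; exists C1, C2; split => // z w zC wC.
exact: (CN (z, w)).
Qed.

Lemma existsT_exists (A B : Type) (Q : (A -> B) -> Prop) :
  {f & Q f} -> exists f, Q f.
Proof. by case=> f Hf; exists f. Qed.

Lemma in_flatten_map (T : eqType) (U : Type) (F : U -> seq T) (gs : seq U) g x :
  List.In g gs -> x \in F g -> x \in flatten (map F gs).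
Proof.
elim: gs => [//|g' gs IH] /= [->|gin] xF; rewrite mem_cat ?xF //.
by rewrite IH ?orbT.
Qed.

Section Amen.
Context (X : topologicalType) (R : realType) (E : tvsType R) (K : set E)
  (act : (X -> X) -> E -> E).
Hypothesis Hcont : {within (Homeo `*` K : set ({ptws X -> X} * E)),
   continuous (fun p : {ptws X -> X} * E => act p.1 p.2)}.

Lemma cont_act u0 y : Homeo u0 -> K y -> forall N, nbhs (act u0 y) N ->
  exists s : seq X, exists2 M, nbhs y M & forall u y', Homeo u ->
    (forall x, x \in s -> u x = u0 x) -> M y' -> K y' -> N (act u y').
Proof.
move=> Hu0 Ky N HN.
have := @Hcont ((u0, y) : {ptws X -> X} * E) N HN.
have HA : (Homeo `*` K : set ({ptws X -> X} * E)) (u0, y) by split.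
move=> H.
have H2 : within (Homeo `*` K : set ({ptws X -> X} * E)) (nbhs ((u0, y) : {ptws X -> X} * E))
   ((fun p : {ptws X -> X} * E => act p.1 p.2) @^-1` N).
  rewrite (@nbhs_subspace_in ({ptws X -> X} * E)%type (Homeo `*` K) (u0, y) HA).
  exact: H.
move: H2; rewrite /within /= => -[[B1 B2] /= [B1u B2y] HB].
have [s Hs] := ptws_nbhs B1u.
exists s, B2 => // u y' Hu us My' Ky'.
by apply: (HB (u, y')) => //; split => //=; apply: Hs.
Qed.

Hypothesis Kc : compact K.
Hypothesis Hid : forall k, K k -> act id k = k.

Lemma claimU W : nbhs 0 W -> exists s : seq X, forall u, Homeo u ->
  (forall x, x \in s -> u x = x) -> forall y, K y -> W (act u y - y).
Proof.
move=> W0.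
have NC := (near_covering_withinP K).2 ((compact_near_coveringP K).1 Kc).
have := NC _ (agree_filter id) (fun u y => Homeo u -> W (act u y - y)) (agree_filter_filter id).
case.
  move=> y Ky.
  have [C1 [C2 [C1y C2y HC]]] : exists C1 C2, [/\ nbhs y C1, nbhs y C2 &
    forall z w, C1 z -> C2 w -> W (z - w)] by apply: sub_near; rewrite subrr.
  have [s [M My HM]] : exists s : seq X, exists2 M, nbhs y M & forall u y', Homeo u ->
    (forall x, x \in s -> u x = id x) -> M y' -> K y' -> C1 (act u y').
    by apply: cont_act => //; [exact: homeo_id|rewrite Hid].
  exists (M `&` C2, agree_on s id); first by split => //=; [exact: filterI|exists s].
  move=> [y' u] /= [[My' C2y'] us] Ky' Hu.
  by apply: HC => //; apply: HM.
move=> s _ Hs; exists s => u Hu us y Ky.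
exact: (Hs u us y Ky Hu).
Qed.

Hypothesis FT : fully_transitive X.
Hypothesis K0 : K !=set0.
Hypothesis Kconv : convex_set (K : set (convex_lmodType E)).
Hypothesis Hstab : forall g k, Homeo g -> K k -> K (act g k).
Hypothesis Hcomp : forall g h k, Homeo g -> Homeo h -> K k -> act (g \o h) k = act g (act h k).
Hypothesis Haff : forall g a b (t : R), Homeo g -> K a -> K b -> 0 <= t -> t <= 1 ->
       act g (t *: a + (1 - t) *: b) = t *: act g a + (1 - t) *: act g b.

Lemma approx W (gs : seq (X -> X)) : nbhs 0 W ->
  convex_set (W : set (convex_lmodType E)) ->
  (forall g, List.In g gs -> Homeo g) ->
  exists2 k, K k & forall g, List.In g gs -> W (act g k - k).
Proof.
move=> W0 Wc Hgs.
have [s Hs] := claimU W0.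
have [k0 Kk0] := K0.
case: s Hs => [|x0 s'] Hs.
  by exists k0 => // g /Hgs Hg; apply: Hs.
set s := x0 :: s' in Hs.
have [gi Hgi] : exists gi : (X -> X) -> X -> X, forall g, Homeo g ->
    [/\ Homeo (gi g), cancel g (gi g) & cancel (gi g) g].
  suff [gi0 Hgi0] : {gi : (X -> X) -> X -> X & forall g, Homeo g ->
    [/\ Homeo (gi g), cancel g (gi g) & cancel (gi g) g]} by exists gi0.
  apply: (@choice _ _ (fun g gig => Homeo g -> [/\ Homeo gig, cancel g gig & cancel gig g])).
  move=> g; case: (pselect (Homeo g)) => [Hg|nHg]; last by exists id.
  by have [k Hk] := homeo_inv Hg; exists k.
set B := undup (s ++ flatten [seq map (gi g) s | g <- gs]).
have Bu : uniq B := undup_uniq _.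
set m := size B.
pose b (j : 'I_m) := nth x0 B j.
have binj : injective b.
  by move=> i j /eqP; rewrite /b nth_uniq // => /eqP/val_inj.
have sB : forall a, a \in s -> a \in B.
  by move=> a ain; rewrite mem_undup mem_cat ain.
have giB : forall g a, List.In g gs -> a \in s -> gi g a \in B.
  move=> g a gin ain; rewrite mem_undup mem_cat; apply/orP; right.
  by apply: (in_flatten_map (F := fun g => map (gi g) s) gin); rewrite map_f.
have bidx : forall a, a \in B -> exists j : 'I_m, b j = a.
  move=> a aB; have im : (index a B < m)%N by rewrite index_mem.
  by exists (Ordinal im); rewrite /b /= nth_index.
pose e : rel 'I_m := fun i j => `[< horb (b i) (b j) >].
have erf : forall x, e x x by move=> x; apply/asboolP; exact: orb_refl.
have esy : forall x y, e x y -> e y x.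
  by move=> x y /asboolP H; apply/asboolP; exact: orb_sym.
have etr : forall x y z, e x y -> e y z -> e x z.
  by move=> x y z /asboolP H1 /asboolP H2; apply/asboolP; exact: orb_trans H1 H2.
pose P := [pred sg : {perm 'I_m} | [forall j, e j (sg j)]].
have P1 : P 1%g by apply/forallP => j; rewrite perm1.
have PM : forall sg tau, P sg -> P tau -> P (sg * tau)%g.
  move=> sg tau /forallP H1 /forallP H2; apply/forallP => j; rewrite permM.
  exact: etr (H1 j) (H2 (sg j)).
have PV : forall sg, P sg -> P sg^-1%g.
  move=> sg /forallP H1; apply/forallP => j; apply: esy.
  by have := H1 (sg^-1%g j); rewrite permKV.
have [H HH] : exists H : {perm 'I_m} -> X -> X, forall sg,
    Homeo (H sg) /\ (P sg -> forall j, H sg (b j) = b (sg j)).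
  suff [H0 HH0] : {H : {perm 'I_m} -> X -> X & forall sg,
    Homeo (H sg) /\ (P sg -> forall j, H sg (b j) = b (sg j))} by exists H0.
  apply: (@choice _ _ (fun sg h => Homeo h /\ (P sg -> forall j, h (b j) = b (sg j)))).
  move=> sg; case: (pselect (P sg)) => [Psg|nP]; last first.
    by exists id; split => //; exact: homeo_id.
  have [h Hh hb] : exists2 h, Homeo h & forall i, h (b i) = (b \o sg) i.
    apply: (@FT m b (b \o sg) binj).
    - by apply: inj_comp => //; exact: perm_inj.
    - move=> j; apply: orb_similar; move/forallP: Psg => /(_ j) /asboolP //.
  by exists h; split.
pose ys := [seq act (H sg) k0 | sg <- enum P].
have ysK : forall y, y \in ys -> K y.
  by move=> y /mapP [sg _ ->]; apply: Hstab => //; case: (HH sg).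
have ysn : ys != [::].
  have : (1%g \in enum P) by rewrite mem_enum.
  by rewrite /ys; case: (enum P).
exists (avg ys); first exact: conv_avg.
move=> g gin; have Hg := Hgs g gin; have [Hgi1 Hgi2 Hgi3] := Hgi g Hg.
pose f (l : 'I_m) := [pick j | (b j \in s) && (g (b l) == b j)].
have finj : forall x x' y, f x = Some y -> f x' = Some y -> x = x'.
  move=> x x' y; rewrite /f; case: pickP => // j /andP[_ /eqP gx] [<-].
  case: pickP => // j' /andP[_ /eqP gx'] [ej]; subst j'.
  by apply: binj; apply: (homeo_inj Hg); rewrite gx gx'.
have fe : forall x y, f x = Some y -> e x y.
  move=> x y; rewrite /f; case: pickP => // j /andP[_ /eqP gx] [<-].
  by apply/asboolP; exists g.
have [tau [taue tauf]] := perm_extend erf esy etr finj fe.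
have Ptau : P tau by apply/forallP.
have E1 : forall F : {perm 'I_m} -> E,
    avg (map F (enum P)) = (#|P|%:R)^-1 *: \sum_(sg in P) F sg.
  by move=> F; rewrite /avg size_map -cardE big_map big_enum.
have Hterm : forall sg, P sg ->
    W (act g (act (H sg) k0) - act (H (sg * tau)%g) k0).
  move=> sg Psg.
  have Pst := PM _ _ Psg Ptau.
  have [Hst Hstb] := HH (sg * tau)%g.
  have [Hsg Hsgb] := HH sg.
  have [hi [Hhi c1 c2]] := homeo_inv Hst.
  pose w := g \o H sg \o hi.
  have Hw : Homeo w by apply: homeo_comp => //; apply: homeo_comp.
  have eqw : g \o H sg = w \o H (sg * tau)%g.
    by apply: funext => x; rewrite /w /= c1.
  rewrite -Hcomp // eqw Hcomp //; apply: Hs => //; last by apply: Hstab.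
  move=> a ain.
  have [j bj] := bidx a (sB a ain).
  have [l bl] := bidx (gi g a) (giB g a gin ain).
  have fl : f l = Some j.
    rewrite /f; case: pickP => [j' /andP[j's /eqP gj']|none].
      by congr Some; apply: binj; rewrite -gj' bl Hgi3 bj.
    by move: (none j); rewrite bj ain bl Hgi3 eqxx.
  have taul : tau l = j := tauf _ _ fl.
  have hb : H (sg * tau)%g (b (sg^-1 (tau^-1 j)))%g = b j.
    by rewrite (Hstb Pst) permM !permKV.
  have hib : hi (b j) = b (sg^-1 (tau^-1 j))%g by rewrite -hb c1.
  rewrite /w /= -{1}bj hib (Hsgb Psg) permKV -taul permK bl Hgi3.
  done.
rewrite (affine_avg (K := K) (phi := act g) Kconv _ ysn ysK); last first.
  by move=> a c t Ka Kc' t0 t1; apply: Haff.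
rewrite /ys -map_comp !E1 -scalerBr.
have R2 : \sum_(sg in P) act (H sg) k0 = \sum_(sg in P) act (H (sg * tau)%g) k0.
  rewrite (reindex_inj (mulIg tau)) /=; apply: eq_bigl => sg.
  apply/idP/idP => Hin.
    have := PM _ _ Hin (PV _ Ptau); by rewrite -mulgA mulgV mulg1.
  exact: PM.
rewrite R2 -sumrB -(E1 (fun sg => act g (act (H sg) k0) - act (H (sg * tau)%g) k0)).
apply: conv_avg => //.
  have : (1%g \in enum P) by rewrite mem_enum.
  by case: (enum P).
by move=> y /mapP [sg]; rewrite mem_enum => Psg ->; apply: Hterm.
Qed.

Hypothesis HE : hausdorff_space E.

Lemma nbhs_In (l : seq ((X -> X) * set E)) :
  (forall p, List.In p l -> nbhs (0 : E) p.2) ->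
  nbhs (0 : E) [set z | forall p, List.In p l -> p.2 z].
Proof.
elim: l => [|p l IH] Hl.
  by apply: filterS (@filterT _ _ (nbhs_filter (0 : E)) ) => z _ p [].
have H1 := Hl p (or_introl erefl).
have H2 : nbhs (0 : E) [set z | forall p, List.In p l -> p.2 z].
  by apply: IH => q ql; apply: Hl; right.
apply: filterS (filterI H1 H2) => z [z1 z2] q /= [<-|ql] //; exact: z2.
Qed.

Lemma amen_fix : exists2 k, K k & forall g, Homeo g -> act g k = k.
Proof.
pose D := [set l : seq ((X -> X) * set E) | forall p, List.In p l -> Homeo p.1 /\ nbhs (0 : E) p.2].
pose S l := [set k | K k /\ forall p, List.In p l -> p.2 (act p.1 k - k)].
pose FF := filter_from D S.
have FFf : Filter FF.
  apply: filter_from_filter; first by exists [::].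
  move=> l1 l2 D1 D2; exists (l1 ++ l2).
    by move=> p /List.in_app_iff [/D1|/D2].
  move=> k [Kk Hk]; split; split => // p pl; apply: Hk; apply/List.in_app_iff; tauto.
have FFp : ProperFilter FF.
  apply: filter_from_proper => l Dl.
  have W1 := nbhs_In (fun p pl => (Dl p pl).2).
  have [Bs Bconv [Bopen Bcvg]] := @locally_convex R E.
  have [U [BU U0] UW1] := Bcvg 0 _ W1.
  have U0' : nbhs (0 : E) U by apply: open_nbhs_nbhs; split => //; exact: Bopen.
  have Uc := Bconv U (mem_set BU).
  have Hl : forall g, List.In g (map fst l) -> Homeo g.
    by move=> g /List.in_map_iff [p [<- pl]]; exact: (Dl p pl).1.
  have [k Kk Hk] := @approx U (map fst l) U0' Uc Hl.
  exists k; split => // p pl; apply: (UW1 _ (Hk p.1 _)) => //.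
  by apply/List.in_map_iff; exists p.
have FK : FF K by exists [::] => // k [].
have [k [Kk clk]] := Kc FFp FK.
exists k => // g Hg.
apply: HE => A B Aa Bk.
have [C1 [C2 [C1a C2b HC]]] : exists C1 C2, [/\ nbhs (act g k) C1, nbhs (0 : E) C2 &
    forall z w, C1 z -> C2 w -> A (z - w)] by apply: sub_near; rewrite subr0.
have [s [M Mk HM]] := cont_act Hg Kk C1a.
have FS : FF (S [:: (g, C2)]).
  by exists [:: (g, C2)] => // p /= [<-|//]; split.
have [y [[Ky Hy] [My By]]] := clk _ _ FS (filterI Mk Bk).
exists y; split => //.
have -> : y = act g y - (act g y - y) by rewrite opprB addrC subrK.
apply: HC; first exact: HM.
exact: (Hy (g, C2) (or_introl erefl)).
Qed.
End Amen.

Section Roel.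
Context (X : topologicalType).
Hypothesis FT : fully_transitive X.

Lemma ft_seq (x0 : X) (xs ys : seq X) : size xs = size ys -> uniq xs -> uniq ys ->
  (forall i, (i < size xs)%N -> horb (nth x0 xs i) (nth x0 ys i)) ->
  exists2 u, Homeo u & map u xs = ys.
Proof.
move=> sz ux uy Ho.
pose b (i : 'I_(size xs)) := nth x0 xs i.
pose c (i : 'I_(size xs)) := nth x0 ys i.
have binj : injective b by move=> i j /eqP; rewrite /b nth_uniq // => /eqP/val_inj.
have cinj : injective c.
  by move=> i j /eqP; rewrite /c nth_uniq -?sz // => /eqP/val_inj.
have [u Hu ub] : exists2 u, Homeo u & forall i, u (b i) = c i.
  apply: (@FT (size xs) b c binj cinj) => i; apply: orb_similar; exact: Ho.
exists u => //; apply: (@eq_from_nth _ x0); rewrite size_map // => i ilt.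
by rewrite (nth_map x0) // -/(b (Ordinal ilt)) ub.
Qed.

Lemma roelcke : roelcke_precompact X.
Proof.
move=> U [UH [V Vid VU]].
have [s0 Hs0] := ptws_nbhs Vid.
have fixU0 : forall u, Homeo u -> (forall x, x \in s0 -> u x = x) -> U u.
  by move=> u Hu us; apply: VU; split => //; apply: Hs0.
case: s0 Hs0 fixU0 => [|x0 s1] Hs0 fixU0.
  exists [set id]; first by split; [exact: finite_set1|move=> f ->; exact: homeo_id].
  apply/seteqP; split => g.
    move=> Hg; exists g, id, id; split => //; apply: fixU0 => //; exact: homeo_id.
  move=> [u [f [v [Uu -> Uv ->]]]].
  by apply: homeo_comp; [apply: homeo_comp; [exact: UH|exact: homeo_id]|exact: UH].
set a := undup (x0 :: s1).
have ua : uniq a := undup_uniq _.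
have fixU : forall u, Homeo u -> (forall x, x \in a -> u x = x) -> U u.
  by move=> u Hu ua'; apply: fixU0 => // x xs; apply: ua'; rewrite mem_undup.
set n := size a.
pose A (j : 'I_n) := nth x0 a j.
have Ainj : injective A by move=> i j /eqP; rewrite /A nth_uniq // => /eqP/val_inj.
have Aidx : forall x, x \in a -> exists j, A j = x.
  move=> x xa; have im : (index x a < n)%N by rewrite index_mem.
  by exists (Ordinal im); rewrite /A /= nth_index.
have Aa : forall j, A j \in a by move=> j; rewrite /A mem_nth.
pose pat (g : X -> X) : {ffun 'I_n -> option 'I_n} := [ffun j => [pick i | g (A j) == A i]].
have [rep Hrep] : exists rep : {ffun 'I_n -> option 'I_n} -> X -> X, forall p,
    Homeo (rep p) /\ ((exists2 g, Homeo g & pat g = p) -> pat (rep p) = p).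
  suff [r0 Hr0] : {rep : {ffun 'I_n -> option 'I_n} -> X -> X & forall p,
    Homeo (rep p) /\ ((exists2 g, Homeo g & pat g = p) -> pat (rep p) = p)} by exists r0.
  apply: (@choice _ _ (fun p r => Homeo r /\ ((exists2 g, Homeo g & pat g = p) -> pat r = p))).
  move=> p; case: (pselect (exists2 g, Homeo g & pat g = p)) => [[g Hg pg]|np].
    by exists g.
  by exists id; split => //; exact: homeo_id.
exists (rep @` setT).
  split; first exact: finite_image finite_finset.
  by move=> f [p _ <-]; case: (Hrep p).
apply/seteqP; split => g; last first.
  move=> [u [f [v [Uu Ff Uv ->]]]].
  have Hf : Homeo f by case: Ff => p _ <-; case: (Hrep p).
  by apply: homeo_comp; [apply: homeo_comp; [exact: UH|exact: Hf]|exact: UH].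
move=> Hg.
set f := rep (pat g).
have [Hf pf] := Hrep (pat g).
have pfg : pat f = pat g := pf (ex_intro2 _ _ g Hg erefl).
have Key : forall x, x \in a -> (g x \in a -> f x = g x) /\ (g x \notin a -> f x \notin a).
  move=> x xa; have [j Aj] := Aidx x xa.
  have pj : [pick i | f (A j) == A i] = [pick i | g (A j) == A i].
    by have := congr1 (fun p : {ffun 'I_n -> option 'I_n} => p j) pfg; rewrite /= !ffunE.
  rewrite -Aj; split.
    move=> gxa; have [i Ai] := Aidx _ gxa.
    move: pj; case: pickP => [i' /eqP fi|fn]; case: pickP => [i'' /eqP gi|gn] //.
      by case=> eq; rewrite fi gi eq.
    by move: (gn i); rewrite Ai eqxx.
  move=> gxn; apply/negP => fxa; have [i Ai] := Aidx _ fxa.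
  move: pj; case: pickP => [i' /eqP fi|fn]; case: pickP => [i'' /eqP gi|gn] //.
    by move: gxn; rewrite gi Aa.
  by move: (fn i); rewrite Ai eqxx.
set L := [seq x <- a | g x \notin a].
have uL : uniq L by rewrite filter_uniq.
have Lin : forall x, x \in L -> x \in a /\ g x \notin a.
  by move=> x; rewrite mem_filter => /andP[].
have [fi [Hfi f1 f2]] := homeo_inv Hf.
have Hex : exists2 u, Homeo u & map u (a ++ map f L) = a ++ map g L.
  apply: (@ft_seq x0).
  - by rewrite !size_cat !size_map.
  - rewrite cat_uniq ua (map_inj_uniq (homeo_inj Hf)) uL andbT /=.
    apply/hasPn => y /mapP [x xL ->]; have [xa gxn] := Lin x xL.
    exact: (Key x xa).2.
  - rewrite cat_uniq ua (map_inj_uniq (homeo_inj Hg)) uL andbT /=.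
    by apply/hasPn => y /mapP [x xL ->]; have [xa gxn] := Lin x xL.
  - move=> i; rewrite size_cat size_map => ilt; rewrite !nth_cat.
    case: ifP => ia; first exact: orb_refl.
    have iL : (i - size a < size L)%N.
      by move/negbT: ia; rewrite -leqNgt => ia; rewrite ltn_subLR.
    rewrite !(nth_map x0) //.
    set y := nth x0 L (i - size a).
    exists (g \o fi); first by apply: homeo_comp.
    by rewrite /= f1.
have [u Hu mu] := Hex.
move: mu; rewrite map_cat => /eqP; rewrite eqseq_cat ?size_map // => /andP[/eqP ma /eqP mL].
have ufix : forall x, x \in a -> u x = x.
  by move=> x xa; have := (eq_in_map u id a).2; rewrite map_id => /(_ ma) ->.
have uf : forall x, x \in a -> u (f x) = g x.
  move=> x xa; case: (boolP (g x \in a)) => gxa.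
    by rewrite (Key x xa).1 // ufix.
  have xL : x \in L by rewrite mem_filter gxa xa.
  move: mL; rewrite -map_comp => /(eq_in_map (u \o f) g L).2 H.
  exact: H.
have [ui [Hui u1 u2]] := homeo_inv Hu.
pose v := fi \o ui \o g.
have Hv : Homeo v by apply: homeo_comp => //; apply: homeo_comp.
exists u, f, v; split.
- exact: fixU.
- by exists (pat g).
- apply: fixU => // x xa; rewrite /v /= -uf // u1 f1 //.
- by apply: funext => x; rewrite /v /f /= f2 u2.
Qed.
End Roel.

Theorem theorem14 (X : topologicalType) :
  scattered X -> fully_transitive X ->
  amenable X /\ roelcke_precompact X.
Proof.
move=> _ FT; split; last exact: roelcke FT.
move=> R E K act HE K0 Kc Kconv Hstab Hid Hcomp Haff Hcont.
exact: (@amen_fix X R E K act Hcont Kc Hid FT K0 Kconv Hstab Hcomp Haff HE).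
Qed.
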